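(* Let $\mathcal{H}$ be an infinite-dimensional Hilbert space, $A$ a self-adjoint operator on $\mathcal{H}$, semi-bounded below, with compact resolvent, eigenvalues $\lambda_1\le\lambda_2\le\dots$ (with multiplicity), and $t\notin\mathrm{Spec}(A)$. Let $\mathcal{L}\subset\mathrm{D}(A)$ be a finite-dimensional subspace, $j\in\mathbb{N}$ and $u\in F_j$. Then, for either choice of sign, \[\mathfrak{a}^2_t(u-P^\pm u,u-P^\pm u)\le\sum_{k=1}^j\left(\llbracket\phi_k-P^\pm\phi_k\rrbracket^\pm_t\right)^2.\]
   Context: For $u,v\in\mathrm{D}(A)$: $\mathfrak{a}^1_t(u,v)=\langle (A-t)u,v\rangle$, $\mathfrak{a}^2_t(u,v)=\langle (A-t)u,(A-t)v\rangle$, $|u|_t=\mathfrak{a}^2_t(u,u)^{1/2}$. Let $\mu^-_1(t)=\inf_{u\ne0}\mathfrak{a}^1_t(u,u)/\mathfrak{a}^2_t(u,u)$, $\mu^+_1(t)=\sup_{u\ne0}\mathfrak{a}^1_t(u,u)/\mathfrak{a}^2_t(u,u)$ (over $u\in\mathrm{D}(A)$), $\mathfrak{b}^-_t=\mathfrak{a}^1_t+(1-\mu^-_1(t))\mathfrak{a}^2_t$, $\mathfrak{b}^+_t=-\mathfrak{a}^1_t+(1+\mu^+_1(t))\mathfrak{a}^2_t$, $\llbracket u\rrbracket^\pm_t=\mathfrak{b}^\pm_t(u,u)^{1/2}$. $P^\pm:\mathrm{D}(A)\to\mathcal{L}$ is the orthogonal projection with respect to the inner product $\mathfrak{b}^\pm_t$.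 $\{\phi_k\}_{k\ge1}$ are eigenvectors, $A\phi_k=\lambda_k\phi_k$, orthonormal in $\mathfrak{a}^2_t$; $E_j=\mathrm{Span}\{\phi_1,\dots,\phi_j\}$ and $F_j=\{u\in E_j:|u|_t=1\}$. *)

(* Defs.v *)
From HB Require Import structures.
From mathcomp Require Import all_boot all_order all_algebra.
From mathcomp Require Import complex.
From mathcomp Require Import boolp classical_sets reals.

Set Implicit Arguments.
Unset Strict Implicit.
Unset Printing Implicit Defensive.

Import Order.TTheory GRing.Theory Num.Theory.
Local Open Scope ring_scope.
Local Open Scope classical_set_scope.
Local Open Scope complex_scope.

Section Hilbert.
Variable R : realType.
Local Notation C := R[i].
Variable H : lmodType C.
(* inner product, linear in the first argument, antilinear in the second *)
Variable ip : H -> H -> C.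

Definition hnorm (u : H) : R := Num.sqrt ((@complex.Re R) (ip u u)).

Definition hcvg (u : nat -> H) (l : H) : Prop :=
  forall e : R, 0 < e -> exists N : nat, forall n, (N <= n)%N -> hnorm (u n - l) < e.

Definition hcauchy (u : nat -> H) : Prop :=
  forall e : R, 0 < e -> exists N : nat,
    forall m n, (N <= m)%N -> (N <= n)%N -> hnorm (u m - u n) < e.

Definition is_hilbert : Prop :=
  [/\ (forall (a : C) (u v w : H), ip (a *: u + v) w = a * ip u w + ip v w),
      (forall u v : H, ip v u = (ip u v)^*),
      (forall u : H, u != 0 -> 0 < ip u u) &
      (forall u : nat -> H, hcauchy u -> exists l, hcvg u l)].

Definition infinite_dimensional : Prop :=
  forall n : nat, exists e : 'I_n -> H,
    forall i j : 'I_n, ip (e i) (e j) = (i == j)%:R.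

Variables (A : H -> H) (D : set H).

Definition is_subspace (S : set H) : Prop :=
  S 0 /\ forall (a : C) u v, S u -> S v -> S (a *: u + v).

(* A : D(A) -> H is a self-adjoint (densely defined) operator:
   A is linear on D, D is dense, A is symmetric, and D(A^* ) is contained in D(A)
   with A^* = A there. *)
Definition self_adjoint : Prop :=
  [/\ is_subspace D,
      (forall (a : C) u v, D u -> D v -> A (a *: u + v) = a *: A u + A v),
      (forall v e, 0 < e -> exists u, D u /\ hnorm (v - u) < e),
      (forall u v, D u -> D v -> ip (A u) v = ip u (A v)) &
      (forall v w, (forall u, D u -> ip (A u) v = ip u w) -> D v /\ A v = w)].

Definition semibounded_below : Prop :=
  exists c : R, forall u, D u -> c * hnorm u ^+ 2 <= (@complex.Re R) (ip (A u) u).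

Definition resolvent_op (z : C) (Rz : H -> H) : Prop :=
  [/\ (forall v, D (Rz v)),
      (forall v, A (Rz v) - z *: Rz v = v),
      (forall u, D u -> Rz (A u - z *: u) = u) &
      exists K : R, forall v, hnorm (Rz v) <= K * hnorm v].

Definition compact_op (T : H -> H) : Prop :=
  forall v : nat -> H, (exists M : R, forall n, hnorm (v n) <= M) ->
    exists (sigma : nat -> nat) (l : H),
      (forall n, (sigma n < sigma n.+1)%N) /\ hcvg (fun n => T (v (sigma n))) l.

Definition compact_resolvent : Prop :=
  exists z Rz, resolvent_op z Rz /\ compact_op Rz.

Definition not_in_spec (z : C) : Prop := exists Rz, resolvent_op z Rz.

Definition a1 (t : R) (u v : H) : C := ip (A u - t%:C *: u) v.
Definition a2 (t : R) (u v : H) : C := ip (A u - t%:C *: u) (A v - t%:C *: v).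
Definition tnorm (t : R) (u : H) : R := Num.sqrt ((@complex.Re R) (a2 t u u)).

Definition rayleigh_set (t : R) : set R :=
  [set r | exists u, [/\ D u, u <> 0 & r = (@complex.Re R) (a1 t u u) / (@complex.Re R) (a2 t u u)]].

Definition mu1_minus (t : R) : R := inf (rayleigh_set t).
Definition mu1_plus (t : R) : R := sup (rayleigh_set t).

(* sign s = false : the form b^-_t ; s = true : the form b^+_t *)
Definition bform (s : bool) (t : R) (u v : H) : C :=
  if s then - a1 t u v + (1 + mu1_plus t)%:C * a2 t u v
  else a1 t u v + (1 - mu1_minus t)%:C * a2 t u v.

Definition bnorm (s : bool) (t : R) (u : H) : R := Num.sqrt ((@complex.Re R) (bform s t u u)).

Definition is_orth_proj (b : H -> H -> C) (L : set H) (P : H -> H) : Prop :=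
  forall u, D u -> L (P u) /\ forall w, L w -> b (u - P u) w = 0.

Definition finite_dim_subspace (L : set H) : Prop :=
  exists (n : nat) (e : 'I_n -> H),
    forall v, L v <-> exists c : 'I_n -> C, v = \sum_(i < n) c i *: e i.

(* E_j = Span{phi_1, .., phi_j}; phi is indexed from 0, phi k standing for phi_{k+1} *)
Definition in_E (phi : nat -> H) (j : nat) (u : H) : Prop :=
  exists c : 'I_j -> C, u = \sum_(k < j) c k *: phi k.

Definition in_F (t : R) (phi : nat -> H) (j : nat) (u : H) : Prop :=
  in_E phi j u /\ tnorm t u = 1.

Definition eigen_basis (t : R) (lambda : nat -> R) (phi : nat -> H) : Prop :=
  [/\ (forall k, lambda k <= lambda k.+1),
      (forall k, D (phi k) /\ A (phi k) = (lambda k)%:C *: phi k),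
      (forall k l, a2 t (phi k) (phi l) = (k == l)%:R) &
      (forall v e, 0 < e -> exists (n : nat) (c : 'I_n -> C),
          hnorm (v - \sum_(k < n) c k *: phi k) < e)].

End Hilbert.

(* Main.v *)
Require Import Defs.
From HB Require Import structures.
From mathcomp Require Import all_boot all_order all_algebra.
From mathcomp Require Import complex.
From mathcomp Require Import boolp classical_sets reals.
From mathcomp Require Import ring lra.
Set Implicit Arguments. Unset Strict Implicit. Unset Printing Implicit Defensive.
Import Order.TTheory GRing.Theory Num.Theory.
Local Open Scope ring_scope.
Local Open Scope complex_scope.


Lemma ReD (R : realType) (x y : R[i]) : complex.Re (x + y) = complex.Re x + complex.Re y.
Proof. by case: x; case: y. Qed.
Lemma ReN (R : realType) (x : R[i]) : complex.Re (- x) = - complex.Re x.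
Proof. by case: x. Qed.
Lemma Re0 (R : realType) : complex.Re (0 : R[i]) = 0.
Proof. by []. Qed.
Lemma Re_sum (R : realType) n (F : 'I_n -> R[i]) :
  complex.Re (\sum_(k < n) F k) = \sum_(k < n) complex.Re (F k).
Proof.
elim: n F => [|n IH] F; first by rewrite !big_ord0.
by rewrite !big_ord_recr /= ReD IH.
Qed.
Lemma ReMC (R : realType) (r : R) (z : R[i]) : complex.Re (r%:C * z) = r * complex.Re z.
Proof. by case: z => a b /=; rewrite mul0r subr0. Qed.
Lemma Re_conj (R : realType) (z : R[i]) : complex.Re (z^*) = complex.Re z.
Proof. by case: z. Qed.
Lemma mul_conj (R : realType) (c : R[i]) :
  c * c^* = (complex.Re c ^+ 2 + complex.Im c ^+ 2)%:C.
Proof. case: c => a b; apply/eqP; rewrite eq_complex /=; apply/andP; split; apply/eqP; ring. Qed.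
Lemma conjC_real (R : realType) (r : R) : (r%:C)^* = r%:C.
Proof. by rewrite /= oppr0. Qed.
Lemma ltcRe (R : realType) (z : R[i]) : 0 < z -> 0 < complex.Re z.
Proof. by rewrite ltcE => /andP[]. Qed.
Lemma conjK (R : realType) (z : R[i]) : z^*^* = z.
Proof. by case: z => a b /=; rewrite opprK. Qed.
Lemma conjN (R : realType) (z : R[i]) : (- z)^* = - z^*.
Proof. by case: z. Qed.
Lemma cc (R : realType) (z : R[i]) : conjc z = Num.conj z. Proof. reflexivity. Qed.
Lemma NcD (R : realType) (x y : R[i]) : Num.conj (x + y) = Num.conj x + Num.conj y.
Proof. by rewrite -!cc; case: x; case: y => a b c d /=; rewrite opprD. Qed.
Lemma NcM (R : realType) (x y : R[i]) : Num.conj (x * y) = Num.conj x * Num.conj y.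
Proof.
rewrite -!cc; case: x; case: y => a b c d /=; apply/eqP; rewrite eq_complex /=.
by apply/andP; split; apply/eqP; ring.
Qed.
Lemma NcN (R : realType) (x : R[i]) : Num.conj (- x) = - Num.conj x.
Proof. by rewrite -!cc; case: x. Qed.
Lemma NcR (R : realType) (r : R) : Num.conj (r%:C) = r%:C.
Proof. by rewrite -cc /= oppr0. Qed.
Lemma Nc1 (R : realType) : Num.conj (1 : R[i]) = 1.
Proof. by rewrite -cc /= oppr0. Qed.
Lemma ReNc (R : realType) (z : R[i]) : complex.Re (Num.conj z) = complex.Re z.
Proof. by rewrite -cc; case: z. Qed.
Lemma Nc0 (R : realType) : Num.conj (0 : R[i]) = 0.
Proof. by rewrite -cc /= oppr0. Qed.

Definition flin (R : realType) (H : lmodType R[i]) (S : set H) (f : H -> H -> R[i]) :=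
  forall a x y z, S x -> S y -> S z -> f (a *: x + y) z = a * f x z + f y z.
Definition fherm (R : realType) (H : lmodType R[i]) (S : set H) (f : H -> H -> R[i]) :=
  forall x y, S x -> S y -> f y x = (f x y)^*.


Lemma sub0 (R : realType) (H : lmodType R[i]) (S : set H) : is_subspace S -> S 0.
Proof. by case. Qed.
Lemma subD (R : realType) (H : lmodType R[i]) (S : set H) x y :
  is_subspace S -> S x -> S y -> S (x + y).
Proof. by move=> [_ hS] hx hy; have := hS 1 x y hx hy; rewrite scale1r. Qed.
Lemma subZ (R : realType) (H : lmodType R[i]) (S : set H) a x :
  is_subspace S -> S x -> S (a *: x).
Proof. by move=> [h0 hS] hx; have := hS a x 0 hx h0; rewrite addr0. Qed.
Lemma subB (R : realType) (H : lmodType R[i]) (S : set H) x y :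
  is_subspace S -> S x -> S y -> S (x - y).
Proof. by move=> hS hx hy; rewrite -scaleN1r; apply: subD => //; apply: subZ. Qed.
Lemma subsum (R : realType) (H : lmodType R[i]) (S : set H) n (c : 'I_n -> R[i]) g :
  is_subspace S -> (forall k, S (g k)) -> S (\sum_(k < n) c k *: g k).
Proof.
move=> hS hg; elim: n c g hg => [|n IH] c g hg; first by rewrite big_ord0; apply: sub0.
rewrite big_ord_recr /=; apply: subD => //; last by apply: subZ.
exact: (IH (fun k => c (widen_ord (leqnSn n) k)) (fun k => g (widen_ord (leqnSn n) k))).
Qed.

Lemma f0l (R : realType) (H : lmodType R[i]) (S : set H) f z :
  is_subspace S -> flin S f -> S z -> f 0 z = 0.
Proof.
move=> hS hf hz; have h0 := sub0 hS.
have := hf 1 0 0 z h0 h0 hz; rewrite scaler0 addr0 mul1r => E.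
by apply: (@addrI _ (f 0 z)); rewrite addr0 -E.
Qed.

Lemma flinr (R : realType) (H : lmodType R[i]) (S : set H) f a x y z :
  is_subspace S -> flin S f -> fherm S f -> S x -> S y -> S z ->
  f z (a *: x + y) = a^* * f z x + f z y.
Proof.
move=> hS hf hh hx hy hz.
have hxy : S (a *: x + y) by apply: subD => //; apply: subZ.
rewrite hh // hf // rmorphD rmorphM /= -!hh //.
Qed.

Lemma fsum_l (R : realType) (H : lmodType R[i]) (S : set H) f n (c : 'I_n -> R[i]) g z :
  is_subspace S -> flin S f -> (forall k, S (g k)) -> S z ->
  f (\sum_(k < n) c k *: g k) z = \sum_(k < n) c k * f (g k) z.
Proof.
move=> hS hf hg hz; elim: n c g hg => [|n IH] c g hg.
  by rewrite !big_ord0; apply: (f0l hS).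
rewrite !big_ord_recr /= addrC hf //; last by apply: subsum.
by rewrite (IH (fun k => c (widen_ord (leqnSn n) k)) (fun k => g (widen_ord (leqnSn n) k))) // addrC.
Qed.

Lemma fsum_r (R : realType) (H : lmodType R[i]) (S : set H) f n (c : 'I_n -> R[i]) g z :
  is_subspace S -> flin S f -> fherm S f -> (forall k, S (g k)) -> S z ->
  f z (\sum_(k < n) c k *: g k) = \sum_(k < n) (c k)^* * f z (g k).
Proof.
move=> hS hf hh hg hz; rewrite hh //; last by apply: subsum.
rewrite (fsum_l c hS hf hg hz) rmorph_sum; apply: eq_bigr => k _.
by rewrite rmorphM /= -hh.
Qed.

Lemma fZl (R : realType) (H : lmodType R[i]) (S : set H) f a x z :
  is_subspace S -> flin S f -> S x -> S z -> f (a *: x) z = a * f x z.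
Proof.
move=> hS hf hx hz; have h0 := sub0 hS.
by have := hf a x 0 z hx h0 hz; rewrite addr0 (f0l hS hf hz) addr0.
Qed.
Lemma fZr (R : realType) (H : lmodType R[i]) (S : set H) f a x z :
  is_subspace S -> flin S f -> fherm S f -> S x -> S z -> f z (a *: x) = a^* * f z x.
Proof.
move=> hS hf hh hx hz; have hax : S (a *: x) by apply: subZ.
by rewrite hh // (fZl a hS hf hx hz) rmorphM /= -hh.
Qed.
Lemma fDl (R : realType) (H : lmodType R[i]) (S : set H) f x y z :
  is_subspace S -> flin S f -> S x -> S y -> S z -> f (x + y) z = f x z + f y z.
Proof. by move=> hS hf hx hy hz; rewrite -[x]scale1r hf // mul1r scale1r. Qed.
Lemma fDr (R : realType) (H : lmodType R[i]) (S : set H) f x y z :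
  is_subspace S -> flin S f -> fherm S f -> S x -> S y -> S z -> f z (x + y) = f z x + f z y.
Proof.
move=> hS hf hh hx hy hz; have hxy : S (x + y) by apply: subD.
by rewrite hh // (fDl hS hf hx hy hz) rmorphD /= -!hh.
Qed.

Lemma f2 (R : realType) (H : lmodType R[i]) (S : set H) f a b x y :
  is_subspace S -> flin S f -> fherm S f -> S x -> S y ->
  f (a *: x + b *: y) (a *: x + b *: y) =
  a * a^* * f x x + a * b^* * f x y + b * a^* * f y x + b * b^* * f y y.
Proof.
move=> hS hf hh hx hy.
have hax : S (a *: x) by apply: subZ.
have hby : S (b *: y) by apply: subZ.
have hw : S (a *: x + b *: y) by apply: subD.
rewrite (fDl hS hf hax hby hw) (fZl a hS hf hx hw) (fZl b hS hf hy hw).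
rewrite !(fDr hS hf hh hax hby) // !(fZr a hS hf hh hx) // !(fZr b hS hf hh hy) //.
ring.
Qed.

Lemma sum4 (R : realType) n (F1 F2 F3 F4 : 'I_n -> 'I_n -> R[i]) :
  \sum_(k < n) \sum_(l < n) (F1 k l - F2 k l - F3 k l + F4 k l) =
  \sum_(k < n) \sum_(l < n) F1 k l - \sum_(k < n) \sum_(l < n) F2 k l
  - \sum_(k < n) \sum_(l < n) F3 k l + \sum_(k < n) \sum_(l < n) F4 k l.
Proof.
rewrite -!sumrB -big_split /=; apply: eq_bigr => k _.
by rewrite -!sumrB -big_split.
Qed.

Lemma fCS (R : realType) (H : lmodType R[i]) (S : set H) f n (c : 'I_n -> R[i]) g :
  is_subspace S -> flin S f -> fherm S f -> (forall k, S (g k)) ->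
  (forall w, S w -> 0 <= complex.Re (f w w)) ->
  complex.Re (f (\sum_(k < n) c k *: g k) (\sum_(k < n) c k *: g k)) <=
  (\sum_(k < n) (complex.Re (c k) ^+ 2 + complex.Im (c k) ^+ 2)) *
  \sum_(k < n) complex.Re (f (g k) (g k)).
Proof.
move=> hS hf hh hg hpos.
set v := \sum_(k < n) c k *: g k.
have hv : S v by apply: subsum.
have EV : f v v = \sum_(k < n) \sum_(l < n) (c k * (c l)^* * f (g k) (g l)).
  rewrite {1}/v (fsum_l c hS hf hg hv); apply: eq_bigr => k _.
  rewrite /v (fsum_r c hS hf hh hg (hg k)) mulr_sumr; apply: eq_bigr => l _.
  by rewrite mulrA.
pose w k l := (c k)^* *: g l + (- (c l)^*) *: g k.
have Pair : forall k l, f (w k l) (w k l) =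
   (c k * (c k)^*) * f (g l) (g l) - (c l)^* * c k * f (g k) (g l)
   - (c k)^* * c l * f (g l) (g k) + (c l * (c l)^*) * f (g k) (g k).
  move=> k l; rewrite /w (f2 _ _ hS hf hh (hg l) (hg k)).
  rewrite !rmorphN /= !conjCK.
  ring.
have T0 : 0 <= complex.Re (\sum_(k < n) \sum_(l < n) f (w k l) (w k l)).
  rewrite Re_sum; apply: sumr_ge0 => k _; rewrite Re_sum; apply: sumr_ge0 => l _.
  apply: hpos; apply: subD => //; apply: subZ => //.
set Nc := \sum_(k < n) (complex.Re (c k) ^+ 2 + complex.Im (c k) ^+ 2).
have ET : \sum_(k < n) \sum_(l < n) f (w k l) (w k l) =
    Nc%:C * (\sum_(k < n) f (g k) (g k)) - f v v - f v v
    + Nc%:C * (\sum_(k < n) f (g k) (g k)).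
  under eq_bigr => k _ do under eq_bigr => l _ do rewrite Pair.
  rewrite sum4; congr (_ - _ - _ + _).
  - rewrite rmorph_sum mulr_suml; apply: eq_bigr => k _.
    by rewrite mulr_sumr; apply: eq_bigr => l _; rewrite mul_conj.
  - rewrite EV; apply: eq_bigr => k _; apply: eq_bigr => l _; ring.
  - rewrite EV exchange_big; apply: eq_bigr => k _; apply: eq_bigr => l _; ring.
  - rewrite exchange_big rmorph_sum mulr_suml; apply: eq_bigr => k _.
    by rewrite mulr_sumr; apply: eq_bigr => l _; rewrite mul_conj.
move: T0; rewrite ET !ReD !ReN ReMC Re_sum.
lra.
Qed.



Lemma subT (R : realType) (H : lmodType R[i]) : is_subspace (@setT H).
Proof. by []. Qed.

Lemma ip_lin (R : realType) (H : lmodType R[i]) (ip : H -> H -> R[i]) :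
  is_hilbert ip -> flin setT ip.
Proof. by case=> hl _ _ _ a x y z _ _ _; apply: hl. Qed.
Lemma ip_herm (R : realType) (H : lmodType R[i]) (ip : H -> H -> R[i]) :
  is_hilbert ip -> fherm setT ip.
Proof. by case=> _ hh _ _ x y _ _; rewrite hh cc. Qed.
Lemma ip_pos (R : realType) (H : lmodType R[i]) (ip : H -> H -> R[i]) x :
  is_hilbert ip -> 0 <= complex.Re (ip x x).
Proof.
move=> hH; have [-> | nx] := eqVneq x 0.
  by rewrite (f0l (subT H) (ip_lin hH)).
by case: hH => _ _ hp _; apply/ltW/ltcRe/hp.
Qed.

Lemma T_lin (R : realType) (H : lmodType R[i]) (ip : H -> H -> R[i]) A D (t : R) a x y :
  self_adjoint ip A D -> D x -> D y ->
  A (a *: x + y) - t%:C *: (a *: x + y) = a *: (A x - t%:C *: x) + (A y - t%:C *: y).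
Proof.
case=> _ hl _ _ _ hx hy; rewrite hl // !scalerDr !scalerN !scalerA [t%:C * a]mulrC.
by rewrite opprD addrACA.
Qed.

Lemma A0 (R : realType) (H : lmodType R[i]) (ip : H -> H -> R[i]) A D :
  self_adjoint ip A D -> A 0 = 0.
Proof.
case=> [[h0 _] hl _ _ _]; have := hl 1 0 0 h0 h0; rewrite scaler0 addr0 scale1r => E.
by apply: (@addrI _ (A 0)); rewrite addr0 -E.
Qed.

Lemma a1_lin (R : realType) (H : lmodType R[i]) (ip : H -> H -> R[i]) A D (t : R) :
  is_hilbert ip -> self_adjoint ip A D -> flin D (a1 ip A t).
Proof.
move=> hH hA a x y z hx hy hz; rewrite /a1 (T_lin _ _ hA) //.
by apply: (ip_lin hH).
Qed.
Lemma a2_lin (R : realType) (H : lmodType R[i]) (ip : H -> H -> R[i]) A D (t : R) :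
  is_hilbert ip -> self_adjoint ip A D -> flin D (a2 ip A t).
Proof.
move=> hH hA a x y z hx hy hz; rewrite /a2 (T_lin _ _ hA) //.
by apply: (ip_lin hH).
Qed.
Lemma a2_herm (R : realType) (H : lmodType R[i]) (ip : H -> H -> R[i]) A D (t : R) :
  is_hilbert ip -> fherm D (a2 ip A t).
Proof. by move=> hH x y _ _; rewrite /a2 (ip_herm hH). Qed.
Lemma a1_herm (R : realType) (H : lmodType R[i]) (ip : H -> H -> R[i]) A D (t : R) :
  is_hilbert ip -> self_adjoint ip A D -> fherm D (a1 ip A t).
Proof.
move=> hH hA x y hx hy; rewrite /a1.
have E : forall z, A z - t%:C *: z = (- t%:C) *: z + A z.
  by move=> z; rewrite addrC scaleNr.
rewrite !E !(ip_lin hH) //.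
case: hA => _ _ _ hs _; rewrite hs // (ip_herm hH (x:=A x) (y:=y)) //.
rewrite (ip_herm hH (x:=x) (y:=y)) // rmorphD rmorphM; congr (_ * _ + _).
by apply/eqP; rewrite eq_complex /= !oppr0 !eqxx.
Qed.

Lemma NconjR (R : realType) (r : R) : Num.conj (r%:C) = r%:C.
Proof. by rewrite -cc /= oppr0. Qed.

Lemma b_lin (R : realType) (H : lmodType R[i]) (ip : H -> H -> R[i]) A D (t : R) s :
  is_hilbert ip -> self_adjoint ip A D -> flin D (bform ip A D s t).
Proof.
move=> hH hA a x y z hx hy hz; rewrite /bform.
rewrite (a1_lin t hH hA) // (a2_lin t hH hA) //; case: s; ring.
Qed.
Lemma b_herm (R : realType) (H : lmodType R[i]) (ip : H -> H -> R[i]) A D (t : R) s :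
  is_hilbert ip -> self_adjoint ip A D -> fherm D (bform ip A D s t).
Proof.
move=> hH hA x y hx hy; rewrite /bform.
rewrite (a1_herm t hH hA (x:=x) (y:=y)) // (a2_herm A t hH (x:=x) (y:=y) (D:=D)) //.
by case: s; rewrite ?cc !NcD !NcM ?NcN NcR.
Qed.

Lemma a2_pos (R : realType) (H : lmodType R[i]) (ip : H -> H -> R[i]) A D (t : R) w :
  is_hilbert ip -> self_adjoint ip A D -> not_in_spec ip A D t%:C ->
  D w -> w != 0 -> 0 < complex.Re (a2 ip A t w w).
Proof.
move=> hH hA [Rz [_ _ hinv _]] hw nw.
have [E | nT] := eqVneq (A w - t%:C *: w) 0.
  have h0 : D 0 by case: hA => [[]].
  have := hinv 0 h0; rewrite (A0 hA) scaler0 subr0 -E hinv // => ew.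
  by move: nw; rewrite ew E eqxx.
by case: hH => _ _ hp _; apply/ltcRe/hp.
Qed.

Lemma a1_bound (R : realType) (H : lmodType R[i]) (ip : H -> H -> R[i]) A D (t : R) :
  is_hilbert ip -> self_adjoint ip A D -> not_in_spec ip A D t%:C ->
  exists M : R, forall w, D w ->
    - (M * complex.Re (a2 ip A t w w)) <= complex.Re (a1 ip A t w w) /\
    complex.Re (a1 ip A t w w) <= M * complex.Re (a2 ip A t w w).
Proof.
move=> hH hA [Rz [_ _ hinv [K hK]]].
exists (1 + K ^+ 2) => w hw.
rewrite /a1 /a2; set v := A w - t%:C *: w.
have hV := ip_pos v hH; have hW := ip_pos w hH.
have hn := hK v; rewrite /v hinv // -/v /hnorm in hn.
have hn2 : complex.Re (ip w w) <= K ^+ 2 * complex.Re (ip v v).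
  have h1 := sqrtr_ge0 (complex.Re (ip w w)).
  have e1 := sqr_sqrtr hW; have e2 := sqr_sqrtr hV.
  rewrite -e1 -e2; nra.
have hS := subT H.
have P := fun b : R[i] => ip_pos (1 *: v + b *: w) hH.
have P1 := P 1; have P2 := P (-1).
rewrite (f2 _ _ hS (ip_lin hH) (ip_herm hH)) // in P1.
rewrite (f2 _ _ hS (ip_lin hH) (ip_herm hH)) // in P2.
rewrite (ip_herm hH (x:=v) (y:=w)) // in P1 P2.
rewrite ?cc ?NcN !Nc1 ?mulN1r ?mulNr ?mulrN ?opprK ?mul1r ?mulr1 in P1 P2.
rewrite !ReD ?ReN ?ReNc ?mulN1r ?ReN in P1 P2.
have hK2 : 0 <= K ^+ 2 by rewrite sqr_ge0.
have hKV : 0 <= K ^+ 2 * complex.Re (ip v v) by rewrite mulr_ge0.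
split; nra.
Qed.

Lemma mu_bounds (R : realType) (H : lmodType R[i]) (ip : H -> H -> R[i]) A D (t : R) w :
  is_hilbert ip -> self_adjoint ip A D -> not_in_spec ip A D t%:C -> D w ->
  mu1_minus ip A D t * complex.Re (a2 ip A t w w) <= complex.Re (a1 ip A t w w) /\
  complex.Re (a1 ip A t w w) <= mu1_plus ip A D t * complex.Re (a2 ip A t w w).
Proof.
move=> hH hA hsp hw.
have [M hM] := a1_bound hH hA hsp.
have hD : is_subspace D by case: hA.
have lb : has_lbound (rayleigh_set ip A D t).
  exists (- M) => y [u [hu nu ->]].
  have V0 := a2_pos hH hA hsp hu (introN eqP nu).
  rewrite ler_pdivlMr // mulNr; exact: (hM u hu).1.
have ub : has_ubound (rayleigh_set ip A D t).
  exists M => y [u [hu nu ->]].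
  have V0 := a2_pos hH hA hsp hu (introN eqP nu).
  rewrite ler_pdivrMr //; exact: (hM u hu).2.
have [-> | nw] := eqVneq w 0.
  have h0 := sub0 hD.
  rewrite (f0l hD (a1_lin t hH hA) h0) (f0l hD (a2_lin t hH hA) h0) Re0.
  by rewrite !mulr0 lexx.
have V0 := a2_pos hH hA hsp hw nw.
have Er : rayleigh_set ip A D t
   (complex.Re (a1 ip A t w w) / complex.Re (a2 ip A t w w)).
  by exists w; split => //; apply/eqP.
split.
  rewrite -ler_pdivlMr //; exact: (ge_inf lb Er).
rewrite -ler_pdivrMr //; exact: (ub_le_sup ub Er).
Qed.

Lemma b_pos (R : realType) (H : lmodType R[i]) (ip : H -> H -> R[i]) A D (t : R) s w :
  is_hilbert ip -> self_adjoint ip A D -> not_in_spec ip A D t%:C -> D w ->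
  complex.Re (a2 ip A t w w) <= complex.Re (bform ip A D s t w w).
Proof.
move=> hH hA hsp hw; have [h1 h2] := mu_bounds hH hA hsp hw.
rewrite /bform; case: s; rewrite ReD ?ReN ReMC; lra.
Qed.

Lemma a2_ge0 (R : realType) (H : lmodType R[i]) (ip : H -> H -> R[i]) A (t : R) w :
  is_hilbert ip -> 0 <= complex.Re (a2 ip A t w w).
Proof. by move=> hH; apply: (ip_pos _ hH). Qed.
Unset Implicit Arguments.

Theorem lemma4p3 (R : realType) (H : lmodType R[i]) (ip : H -> H -> R[i])
  (A : H -> H) (D : set H) (t : R) (lambda : nat -> R) (phi : nat -> H)
  (L : set H) (j : nat) (u : H) (s : bool) (P : H -> H) :
  is_hilbert ip -> infinite_dimensional ip ->
  self_adjoint ip A D -> semibounded_below ip A D -> compact_resolvent ip A D ->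
  not_in_spec ip A D t%:C ->
  eigen_basis ip A D t lambda phi ->
  (forall v, L v -> D v) -> is_subspace L -> finite_dim_subspace L ->
  in_F ip A t phi j u ->
  is_orth_proj D (bform ip A D s t) L P ->
  (@complex.Re R) (a2 ip A t (u - P u) (u - P u))
    <= \sum_(k < j) (bnorm ip A D s t (phi k - P (phi k))) ^+ 2.
Proof.
move=> hH _ hA _ _ hsp [_ hphi horth _] hLD hL _ [[c ->] hu1] hP.
clear u.
have hD : is_subspace D by case: hA.
have hg : forall k : 'I_j, D (phi k) by move=> k; case: (hphi k).
set u := \sum_(k < j) c k *: phi k.
have hu : D u by apply: subsum.
have N1 : \sum_(k < j) (complex.Re (c k) ^+ 2 + complex.Im (c k) ^+ 2) = 1.
  have E : a2 ip A t u u = \sum_(k < j) c k * (c k)^*.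
    rewrite {1}/u (fsum_l c hD (a2_lin t hH hA) hg hu); apply: eq_bigr => k _.
    rewrite /u (fsum_r c hD (a2_lin t hH hA) (a2_herm A t hH (D:=D)) hg (hg k)).
    rewrite (bigD1 k) //= horth eqxx mulr1 big1 ?addr0 //.
    move=> l nlk; rewrite horth.
    have -> : (nat_of_ord k == nat_of_ord l) = false.
      by apply/negbTE; rewrite eq_sym.
    by rewrite mulr0.
  move: hu1; rewrite /tnorm E Re_sum => hs.
  have h0 : 0 <= \sum_(k < j) complex.Re (c k * (c k)^*).
    by apply: sumr_ge0 => k _; rewrite mul_conj /=; apply: addr_ge0; apply: sqr_ge0.
  have e := sqr_sqrtr h0; rewrite hs expr1n in e; rewrite e.
  by apply: eq_bigr => k _; rewrite mul_conj.
pose b := bform ip A D s t.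
have hbl : flin D b := b_lin t s hH hA.
have hbh : fherm D b := b_herm t s hH hA.
have hbpos : forall w, D w -> 0 <= complex.Re (b w w).
  move=> w hw; apply: le_trans (b_pos s hH hA hsp hw); exact: a2_ge0.
have hPL : forall k : 'I_j, L (P (phi k)) by move=> k; exact: (hP _ (hg k)).1.
pose psi := fun k : 'I_j => phi k - P (phi k).
have hpsi : forall k, D (psi k) by move=> k; apply: subB => //; apply: hLD.
pose x := \sum_(k < j) c k *: P (phi k).
have hx : L x by apply: subsum.
pose v := \sum_(k < j) c k *: psi k.
have hv : v = u - x.
  by rewrite /v /u /x -sumrB; apply: eq_bigr => k _; rewrite /psi scalerBr.
have [hPu hPo] := hP u hu.
pose e := u - P u.
have he : D e by apply: subB => //; apply: hLD.
pose y := x - P u.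
have hyL : L y by apply: subB.
have hy : D y by apply: hLD.
have hv2 : v = 1 *: e + (-1) *: y.
  by rewrite hv scale1r scaleN1r /e /y opprB addrA subrK.
have Ebv : b v v = b e e + b y y.
  rewrite hv2 (f2 1 (-1) hD hbl hbh he hy) (hbh _ _ he hy).
  have bey : b e y = 0 := hPo y hyL.
  rewrite bey.
  rewrite ?cc ?NcN ?Nc1 ?Nc0; ring.
have C1 := fCS c hD hbl hbh hpsi hbpos.
rewrite -/v N1 mul1r in C1.
have B1 := b_pos s hH hA hsp he.
have B2 := hbpos y hy.
apply: (le_trans B1); rewrite -/e -/b.
have -> : \sum_(k < j) bnorm ip A D s t (phi k - P (phi k)) ^+ 2 =
          \sum_(k < j) complex.Re (b (psi k) (psi k)).
  by apply: eq_bigr => k _; rewrite /bnorm sqr_sqrtr //; exact: (hbpos _ (hpsi k)).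
move: C1; rewrite Ebv ReD; lra.
Qed.
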